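(* Let $0\le z<x$ and define $h(y)=\operatorname{BP}(x,y)+\operatorname{BP}(y,z)$ for $y\in(z,x)$. Call a pair $(u,v)$ good if $v\ge cu$ and bad if $v<cu$. At every $y\in(z,x)$ with $y\ne cx$ and $z\ne cy$, $h$ is differentiable, and: (i) if $(x,y)$ and $(y,z)$ are both good, then $h'(y)>0$ when $y<\frac{x+z}{2}$ and $h'(y)<0$ when $y>\frac{x+z}2$; (ii) if $(x,y)$ is good and $(y,z)$ is bad, then $h'(y)>0$ when $y<\frac{x}{2-c}$ and $h'(y)<0$ when $y>\frac x{2-c}$; (iii) if $(x,y)$ is bad (whether $(y,z)$ is good or bad), then $h'(y)>0$.
   Context: Let $c=e^{2\pi}/1728$. For $x\ge y\ge0$ define (with the convention $0\log0=0$) \[f(x,y)=(x-y)\log(1728(1-c))+x\log x-y\log y-(x-y)\log(x-y),\qquad g(x,y)=x\log1728-2\pi y,\] and $\operatorname{BP}(x,y)=f(x,y)$ if $y\ge cx$, $\operatorname{BP}(x,y)=g(x,y)$ if $y<cx$. This is continuous on $\{(x,y):x\ge y\ge0\}$. *)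

(* Defs.v *)
From Stdlib Require Import Reals Lra.
From Coquelicot Require Import Coquelicot.
Open Scope R_scope.

Definition c : R := exp (2 * PI) / 1728.

(* t log t with the convention 0 log 0 = 0 (only used for t >= 0) *)
Definition xlogx (t : R) : R := if Rlt_dec 0 t then t * ln t else 0.

Definition f (x y : R) : R :=
  (x - y) * ln (1728 * (1 - c)) + xlogx x - xlogx y - xlogx (x - y).

Definition g (x y : R) : R := x * ln 1728 - 2 * PI * y.

Definition BP (x y : R) : R := if Rle_dec (c * x) y then f x y else g x y.

(* Main.v *)
Require Import Defs.
From Stdlib Require Import Reals Lra.
From Coquelicot Require Import Coquelicot.
Open Scope R_scope.

Lemma PI_le : PI <= 13/4.
Proof.
  assert (H := PI_ineq 5).
  cbv [sum_f_R0 tg_alt PI_tg] in H. simpl in H.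
  repeat rewrite ?S_INR, ?INR_0 in H. lra.
Qed.

Lemma exp2PI_lt : exp (2 * PI) < 1728.
Proof.
  assert (H1 := exp_le_3).
  assert (Hh : exp (1/2) * exp (1/2) = exp 1).
  { rewrite <- exp_plus. f_equal. lra. }
  assert (Hp := exp_pos (1/2)).
  assert (Hh2 : exp (1/2) <= 2) by nra.
  assert (E : exp (13/2) = exp 1 * exp 1 * exp 1 * exp 1 * exp 1 * exp 1 * exp (1/2)).
  { rewrite <- !exp_plus. f_equal. lra. }
  assert (H2 : exp (2 * PI) <= exp (13/2)).
  { destruct (Req_dec (2*PI) (13/2)) as [e|n]. rewrite e; lra.
    left. apply exp_increasing. assert (H := PI_le). lra. }
  assert (He := exp_pos 1).
  assert (exp 1 * exp 1 <= 9) by nra.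
  assert (exp 1 * exp 1 * exp 1 <= 27) by nra.
  assert (exp 1 * exp 1 * exp 1 * exp 1 <= 81) by nra.
  assert (exp 1 * exp 1 * exp 1 * exp 1 * exp 1 <= 243) by nra.
  assert (exp 1 * exp 1 * exp 1 * exp 1 * exp 1 * exp 1 <= 729) by nra.
  assert (exp 1 * exp 1 * exp 1 * exp 1 * exp 1 * exp 1 * exp (1/2) <= 1458) by nra.
  lra.
Qed.

Lemma c_pos : 0 < c.
Proof. unfold c. assert (H := exp_pos (2*PI)). lra. Qed.

Lemma c_lt1 : c < 1.
Proof. unfold c. assert (H := exp2PI_lt). lra. Qed.

Lemma ln1728_gt : 2 * PI < ln 1728.
Proof.
  rewrite <- (ln_exp (2*PI)). apply ln_increasing. apply exp_pos. apply exp2PI_lt.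
Qed.

Definition L := ln (1728 * (1 - c)).

Lemma L_eq : L = ln 1728 + ln (1 - c).
Proof. unfold L. apply ln_mult. lra. assert (H := c_lt1). lra. Qed.

Lemma loc_gt a y : a < y -> locally y (fun t => a < t).
Proof.
  intro H. exists (mkposreal (y - a) ltac:(lra)). intros t Ht.
  unfold ball in Ht; simpl in Ht; unfold AbsRing_ball, abs, minus, plus, opp in Ht; simpl in Ht.
  apply Rabs_lt_between in Ht. lra.
Qed.

Lemma loc_lt a y : y < a -> locally y (fun t => t < a).
Proof.
  intro H. exists (mkposreal (a - y) ltac:(lra)). intros t Ht.
  unfold ball in Ht; simpl in Ht; unfold AbsRing_ball, abs, minus, plus, opp in Ht; simpl in Ht.
  apply Rabs_lt_between in Ht. lra.
Qed.

Lemma dA_good x y : c * x < y -> 0 < y -> y < x ->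
  is_derive (fun t => BP x t) y (- L - ln y + ln (x - y)).
Proof.
  intros H1 H2 H3.
  set (K := xlogx x).
  apply is_derive_ext_loc with
    (f := fun t => (x - t) * L + K - t * ln t - (x - t) * ln (x - t)).
  - generalize (filter_and _ _ (loc_gt _ _ H1) (filter_and _ _ (loc_gt _ _ H2) (loc_lt _ _ H3))).
    apply filter_imp. intros t [Ha [Hb Hc]].
    unfold BP. destruct (Rle_dec (c * x) t) as [_|n]; [|lra].
    match goal with |- ?a = ?b => change (@eq R a b) end. unfold Defs.f, xlogx. fold L.
    destruct (Rlt_dec 0 t); [|lra]. destruct (Rlt_dec 0 (x - t)); [|lra].
    unfold K, xlogx. ring.
  - auto_derive. lra.
    assert (y * / y = 1) by (field; lra).
    assert ((x + - y) * / (x + - y) = 1) by (field; lra).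
    unfold Rminus. nra.
Qed.

Lemma dA_bad x y : y < c * x ->
  is_derive (fun t => BP x t) y (- (2 * PI)).
Proof.
  intros H1.
  apply is_derive_ext_loc with (f := fun t => x * ln 1728 - 2 * PI * t).
  - generalize (loc_lt _ _ H1).
    apply filter_imp. intros t Ha.
    unfold BP. destruct (Rle_dec (c * x) t) as [n|_]; [lra|].
    match goal with |- ?a = ?b => change (@eq R a b) end. unfold Defs.g. ring.
  - auto_derive. auto. ring.
Qed.

Lemma dB_good y z : c * y < z -> 0 <= z -> z < y ->
  is_derive (fun t => BP t z) y (L + ln y - ln (y - z)).
Proof.
  intros H1 H2 H3.
  assert (Hc := c_pos).
  set (K := xlogx z).
  assert (H1' : y < z / c).
  { apply Rmult_lt_reg_l with c. lra. field_simplify; lra. }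
  apply is_derive_ext_loc with
    (f := fun t => (t - z) * L + t * ln t - K - (t - z) * ln (t - z)).
  - generalize (filter_and _ _ (loc_lt _ _ H1') (loc_gt _ _ H3)).
    apply filter_imp. intros t [Ha Hb].
    assert (Hct : c * t < z).
    { apply Rmult_lt_compat_l with (r := c) in Ha; [|lra].
      replace (c * (z / c)) with z in Ha by (field; lra). lra. }
    unfold BP. destruct (Rle_dec (c * t) z) as [_|n]; [|lra].
    match goal with |- ?a = ?b => change (@eq R a b) end. unfold Defs.f, xlogx. fold L.
    destruct (Rlt_dec 0 t); [|lra]. destruct (Rlt_dec 0 (t - z)); [|lra].
    unfold K, xlogx. ring.
  - auto_derive. lra.
    assert (y * / y = 1) by (field; lra).
    assert ((y + - z) * / (y + - z) = 1) by (field; lra).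
    unfold Rminus. nra.
Qed.

Lemma dB_bad y z : z < c * y ->
  is_derive (fun t => BP t z) y (ln 1728).
Proof.
  intros H1.
  assert (Hc := c_pos).
  assert (H1' : z / c < y).
  { apply Rmult_lt_reg_l with c. lra. field_simplify; lra. }
  apply is_derive_ext_loc with (f := fun t => t * ln 1728 - 2 * PI * z).
  - generalize (loc_gt _ _ H1').
    apply filter_imp. intros t Ha.
    assert (Hct : z < c * t).
    { apply Rmult_lt_compat_l with (r := c) in Ha; [|lra].
      replace (c * (z / c)) with z in Ha by (field; lra). lra. }
    unfold BP. destruct (Rle_dec (c * t) z) as [n|_]; [lra|].
    match goal with |- ?a = ?b => change (@eq R a b) end. unfold Defs.g. ring.
  - auto_derive. auto. ring.
Qed.

Theorem mainTheorem14 (x z y : R) :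
  0 <= z -> z < x -> z < y < x -> y <> c * x -> z <> c * y ->
  let h := fun t => BP x t + BP t z in
  ex_derive h y /\
  (* (i) (x,y) good and (y,z) good *)
  (c * x <= y -> c * y <= z ->
     (y < (x + z) / 2 -> Derive h y > 0) /\ (y > (x + z) / 2 -> Derive h y < 0)) /\
  (* (ii) (x,y) good and (y,z) bad *)
  (c * x <= y -> z < c * y ->
     (y < x / (2 - c) -> Derive h y > 0) /\ (y > x / (2 - c) -> Derive h y < 0)) /\
  (* (iii) (x,y) bad *)
  (y < c * x -> Derive h y > 0).
Proof.
  intros Hz Hzx [Hzy Hyx] Hn1 Hn2 h.
  assert (Hc := c_pos). assert (Hc1 := c_lt1). assert (Hl := ln1728_gt).
  assert (HL := L_eq).
  assert (Hy : 0 < y) by lra.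
  assert (H1c : 0 < 1 - c) by lra.
  destruct (Rlt_or_le (c * x) y) as [A|A]; [|assert (A' : y < c * x) by lra];
  (destruct (Rlt_or_le (c * y) z) as [B|B]; [|assert (B' : z < c * y) by lra]).
  -
    assert (D := is_derive_plus _ _ _ _ _ (dA_good x y A Hy Hyx) (dB_good y z B Hz Hzy)).
    fold h in D. simpl in D.
    rewrite (is_derive_unique h _ _ D).
    split; [eexists; exact D|].
    split; [|split; [intros; lra|intros; lra]].
    intros _ _. unfold plus; simpl. split; intro Q.
    + assert (ln (y - z) < ln (x - y)) by (apply ln_increasing; lra). lra.
    + assert (ln (x - y) < ln (y - z)) by (apply ln_increasing; lra). lra.
  -
    assert (D := is_derive_plus _ _ _ _ _ (dA_good x y A Hy Hyx) (dB_bad y z B')).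
    fold h in D.
    rewrite (is_derive_unique h _ _ D).
    split; [eexists; exact D|].
    split; [intros; lra|split; [|intros; lra]].
    intros _ _. unfold plus; simpl. rewrite HL.
    assert (E : ln (y * (1 - c)) = ln y + ln (1 - c)) by (apply ln_mult; lra).
    assert (H2c : 0 < 2 - c) by lra.
    split; intro Q.
    + assert (Q' : y * (2 - c) < x).
      { apply Rmult_lt_compat_r with (r := 2 - c) in Q; [|lra].
        replace (x / (2 - c) * (2 - c)) with x in Q by (field; lra). lra. }
      assert (ln (y * (1 - c)) < ln (x - y)) by (apply ln_increasing; nra). lra.
    + assert (Q' : x < y * (2 - c)).
      { apply Rmult_lt_compat_r with (r := 2 - c) in Q; [|lra].
        replace (x / (2 - c) * (2 - c)) with x in Q by (field; lra). lra. }
      assert (ln (x - y) < ln (y * (1 - c))) by (apply ln_increasing; nra). lra.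
  -
    assert (D := is_derive_plus _ _ _ _ _ (dA_bad x y A') (dB_good y z B Hz Hzy)).
    fold h in D.
    rewrite (is_derive_unique h _ _ D).
    split; [eexists; exact D|].
    split; [intros; lra|split; [intros; lra|]].
    intros _. unfold plus; simpl. rewrite HL.
    assert (E : ln (y * (1 - c)) = ln y + ln (1 - c)) by (apply ln_mult; lra).
    assert (ln (y - z) < ln (y * (1 - c))) by (apply ln_increasing; nra). lra.
  -
    assert (D := is_derive_plus _ _ _ _ _ (dA_bad x y A') (dB_bad y z B')).
    fold h in D.
    rewrite (is_derive_unique h _ _ D).
    split; [eexists; exact D|].
    split; [intros; lra|split; [intros; lra|]].
    intros _. unfold plus; simpl. lra.
Qed.
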